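(* Let $T\in B(\mathcal{F})$ be a block-diagonal operator such that $[T,R_i^*]\in\mathcal{S}$ for $1\le i\le d$. Then $T\in\mathcal{C}=C^*(L_1,\ldots,L_d)$.
   Context: $d\ge2$; $\xi_1,\ldots,\xi_d$ is the standard orthonormal basis of $\mathbb{C}^d$. $\mathcal{F}=\bigoplus_{n\ge0}\mathcal{F}_n$ is the full Fock space, $\mathcal{F}_0=\mathbb{C}\Omega$, $\mathcal{F}_n=(\mathbb{C}^d)^{\otimes n}$ with the usual inner product. $L_j\eta=\xi_j\otimes\eta$, $R_j\eta=\eta\otimes\xi_j$ (with $L_j\Omega=R_j\Omega=\xi_j$). $T$ is block-diagonal if $T(\mathcal{F}_n)\subseteq\mathcal{F}_n$ for all $n$. $\mathcal{S}$ is the set of operators $S\in B(\mathcal{F})$ which are band-limited (there is $b\ge0$ with $S(\mathcal{F}_n)\subseteq\bigoplus_{|m-n|\le b}\mathcal{F}_m$ for all $n$) and summable ($\sum_{n\ge0}\|S|_{\mathcal{F}_n}\|<\infty$). *)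

(* Defs.v *)
From HB Require Import structures.
From mathcomp Require Import all_boot all_order all_algebra.
From mathcomp Require Import complex.
From mathcomp Require Import all_classical all_reals ereal topology normedtype sequences esum.
Set Implicit Arguments. Unset Strict Implicit. Unset Printing Implicit Defensive.
Import Order.TTheory GRing.Theory Num.Theory.
Local Open Scope ring_scope.

Section FockDefs.
Variables (R : realType) (d : nat).

(* Orthonormal basis of the full Fock space: words over {0,..,d-1}.
   The empty word is Omega, the word [:: i1; ...; in] is xi_i1 (x) ... (x) xi_in. *)
Definition word := seq 'I_d.

Definition vec := word -> R[i].
Definition op := vec -> vec.

Definition sqabs (z : R[i]) : R := (complex.Re z) ^+ 2 + (complex.Im z) ^+ 2.

Definition sqnorm (f : vec) : \bar R :=
  (\esum_(w in [set: word]) (sqabs (f w))%:E)%E.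

Definition l2 (f : vec) : Prop := (sqnorm f < +oo)%E.

Definition vnorm (f : vec) : R := Num.sqrt (fine (sqnorm f)).

Definition bounded_op (T : op) : Prop :=
  [/\ (forall f, l2 f -> l2 (T f)),
      (forall (a : R[i]) f g, l2 f -> l2 g ->
         T (fun w => a * f w + g w) = (fun w => a * T f w + T g w))
    & exists M : R, forall f, l2 f -> vnorm (T f) <= M * vnorm f].

Definition in_level (n : nat) (f : vec) : Prop :=
  forall w : word, size w != n -> f w = 0.

Definition Lop (j : 'I_d) : op := fun f w =>
  match w with [::] => 0 | k :: w' => if k == j then f w' else 0 end.
Definition Lstar (j : 'I_d) : op := fun f w => f (j :: w).
Definition Rop (j : 'I_d) : op := fun f w =>
  match rev w with [::] => 0 | k :: u => if k == j then f (rev u) else 0 end.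
Definition Rstar (j : 'I_d) : op := fun f w => f (rcons w j).

Definition opsub (S T : op) : op := fun f w => S f w - T f w.
Definition commutator (S T : op) : op := fun f w => S (T f) w - T (S f) w.

Definition block_diagonal (T : op) : Prop :=
  forall n f, l2 f -> in_level n f -> in_level n (T f).

Definition band_limited (S : op) : Prop :=
  exists b : nat, forall n f, l2 f -> in_level n f ->
    forall w : word, S f w != 0 -> (`|(size w)%:Z - n%:Z| <= b)%N.

Definition restr_norm (S : op) (n : nat) : \bar R :=
  ereal_sup [set (vnorm (S f))%:E | f in
              [set f | l2 f /\ in_level n f /\ vnorm f <= 1]].

Definition summable_op (S : op) : Prop :=
  (\sum_(n <oo) restr_norm S n < +oo)%E.

Definition classS (S : op) : Prop :=
  bounded_op S /\ band_limited S /\ summable_op S.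

(* the *-algebra generated by L_1..L_d (non-unital polynomials in L_j, L_j^* ) *)
Inductive star_poly_L : op -> Prop :=
  | spL_L j : star_poly_L (Lop j)
  | spL_Lstar j : star_poly_L (Lstar j)
  | spL_add S T : star_poly_L S -> star_poly_L T ->
      star_poly_L (fun f w => S f w + T f w)
  | spL_scale (a : R[i]) S : star_poly_L S -> star_poly_L (fun f w => a * S f w)
  | spL_mul S T : star_poly_L S -> star_poly_L T -> star_poly_L (fun f => S (T f)).

(* C = C^*(L_1,...,L_d): operator-norm closure of the *-algebra above *)
Definition in_Cuntz_Toeplitz (T : op) : Prop :=
  forall eps : R, 0 < eps -> exists P : op, star_poly_L P /\
    forall f, l2 f -> vnorm (opsub T P f) <= eps * vnorm f.

End FockDefs.

(* Main.v *)
Require Import Defs.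
From HB Require Import structures.
From mathcomp Require Import all_boot all_order all_algebra.
From mathcomp Require Import complex.
From mathcomp Require Import all_classical all_reals ereal topology normedtype sequences esum.
From mathcomp Require Import ring lra.
Import Order.TTheory GRing.Theory Num.Theory.
Local Open Scope ring_scope.
Module M1.
Section P1.
Variables (R : realType) (d : nat).

Fixpoint wl (n : nat) : seq (seq 'I_d) :=
  match n with
  | 0 => [:: [::]]
  | n'.+1 => [seq rcons w i | i <- enum 'I_d, w <- wl n']
  end.

Lemma mem_wl n w : (w \in wl n) = (size w == n).
Proof.
elim: n w => [|n IH] w /=.
  by rewrite inE; case: w.
apply/allpairsP/idP => [[[i w'] /= [_ Hw ->]]|].
  by rewrite size_rcons eqSS -IH.
case/lastP: w => [//|w' i]; rewrite size_rcons eqSS -IH => Hw.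
by exists (i, w'); rewrite /= mem_enum.
Qed.

Lemma uniq_wl n : uniq (wl n).
Proof.
elim: n => [//|n IH] /=.
apply: allpairs_uniq => //; first exact: enum_uniq.
move=> [i1 w1] [i2 w2] _ _ /= /eqP; rewrite eqseq_rcons => /andP[/eqP -> /eqP ->].
by [].
Qed.

Lemma big_wlS (V : nmodType) n (F : seq 'I_d -> V) :
  \sum_(w <- wl n.+1) F w = \sum_(i <- enum 'I_d) \sum_(w <- wl n) F (rcons w i).
Proof. by rewrite /= big_allpairs_dep. Qed.

Lemma big_if_eq (V : nmodType) (T : eqType) (s : seq T) u (F : T -> V) :
  uniq s -> \sum_(x <- s) (if x == u then F x else 0) = if u \in s then F u else 0.
Proof.
elim: s => [|x s IH] /=; first by rewrite big_nil.
case/andP=> xs us; rewrite big_cons IH // inE.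
case: eqVneq => [<-|_] /=; last by rewrite add0r.
by rewrite (negbTE xs) addr0.
Qed.

Local Notation op := (op R d).
Local Notation SP := (@star_poly_L R d).

Lemma SP_ext {S T : op} : (forall f w, S f w = T f w) -> SP S -> SP T.
Proof.
move=> H; have -> : T = S by apply: funext => f; apply: funext => w; rewrite H.
by [].
Qed.

Variable j0 : 'I_d.

Lemma SP_id : SP (fun f => f).
Proof.
apply: (SP_ext _ (spL_mul (spL_Lstar R j0) (spL_L R j0))) => f w.
by rewrite /Lstar /Lop eqxx.
Qed.

Lemma SP_zero : SP (fun f w => 0).
Proof.
by apply: (SP_ext _ (spL_scale 0 (spL_L R j0))) => f w; rewrite mul0r.
Qed.

Lemma SP_sub S T : SP S -> SP T -> SP (fun f w => S f w - T f w).
Proof.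
move=> hS hT; apply: (SP_ext _ (spL_add hS (spL_scale (-1) hT))) => f w.
by rewrite mulN1r.
Qed.

Lemma SP_sum (I : Type) (s : seq I) (F : I -> op) :
  (forall i, SP (F i)) -> SP (fun f w => \sum_(i <- s) F i f w).
Proof.
move=> hF; elim: s => [|i s IH].
  by apply: (SP_ext _ SP_zero) => f w; rewrite big_nil.
apply: (SP_ext _ (spL_add (hF i) IH)) => f w.
by rewrite big_cons.
Qed.

Definition Lw (u : seq 'I_d) : op := fun f w =>
  if take (size u) w == u then f (drop (size u) w) else 0.
Definition Lws (v : seq 'I_d) : op := fun f w => f (v ++ w).

Lemma SP_Lw u : SP (Lw u).
Proof.
elim: u => [|j u IH].
  by apply: (SP_ext _ SP_id) => f w; rewrite /Lw take0 drop0.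
apply: (SP_ext _ (spL_mul (spL_L R j) IH)) => f w.
rewrite /Lw /Lop /=; case: w => [|k w] //=.
by rewrite eqseq_cons; case: eqVneq.
Qed.

Lemma SP_Lws v : SP (Lws v).
Proof.
elim: v => [|j v IH].
  by apply: (SP_ext _ SP_id) => f w.
by apply: (SP_ext _ (spL_mul IH (spL_Lstar R j))) => f w.
Qed.

Definition Pom : op := fun f w => if w == [::] then f w else 0.

Lemma SP_Pom : SP Pom.
Proof.
have H : SP (fun f w => f w - \sum_(j <- enum 'I_d) Lop j (Lstar j f) w).
  apply: SP_sub; first exact: SP_id.
  by apply: SP_sum => j; apply: spL_mul; [apply: spL_L|apply: spL_Lstar].
apply: (SP_ext _ H) => f w; rewrite /Pom.
case: w => [|k w] /=.
  by rewrite big1 ?subr0 // => j _.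
rewrite /Lop /Lstar.
have -> : \sum_(j <- enum 'I_d) (if k == j then f (j :: w) else 0)
         = \sum_(j <- enum 'I_d) (if j == k then f (j :: w) else 0).
  by apply: eq_bigr => j _; rewrite eq_sym.
by rewrite big_if_eq ?enum_uniq // mem_enum subrr.
Qed.

Definition Eop (u v : seq 'I_d) : op := fun f w =>
  if take (size u) w == u then f (v ++ drop (size u) w) else 0.
Definition E0op (u v : seq 'I_d) : op := fun f w => if w == u then f v else 0.

Lemma SP_Eop u v : SP (Eop u v).
Proof.
by apply: (SP_ext _ (spL_mul (SP_Lw u) (SP_Lws v))) => f w.
Qed.

Lemma SP_E0op u v : SP (E0op u v).
Proof.
apply: (SP_ext _ (spL_mul (SP_Lw u) (spL_mul SP_Pom (SP_Lws v)))) => f w.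
rewrite /Lw /Pom /Lws /E0op.
case: (eqVneq w u) => [->|neq].
  by rewrite take_size eqxx drop_size eqxx cats0.
case: eqVneq => // ht; case: eqVneq => // hd.
by case/eqP: neq; rewrite -(cat_take_drop (size u) w) ht hd cats0.
Qed.

End P1.

Arguments SP_ext {R d S T}. Arguments SP_id {R d} j0. Arguments SP_zero {R d} j0.
Arguments SP_sub {R d S T}. Arguments SP_sum {R d} j0 {I} s F.
Arguments Lw {R d}. Arguments Lws {R d}. Arguments Pom {R d}.
Arguments Eop {R d}. Arguments E0op {R d}.
Arguments SP_Eop {R d}. Arguments SP_E0op {R d}. Arguments SP_Lw {R d}.
Arguments SP_Lws {R d}. Arguments SP_Pom {R d}.
Arguments mem_wl {d}. Arguments uniq_wl {d}. Arguments big_wlS {d V}.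

End M1.
Import M1.
Module M2.
Local Open Scope ereal_scope.
Section P2.
Variable (R : realType).

Lemma tail_small (a : nat -> R) : (forall n, (0 <= a n)%R) ->
  \sum_(n <oo) (a n)%:E < +oo -> forall e : R, (0 < e)%R ->
  exists N, \sum_(N <= k <oo) (a k)%:E <= e%:E.
Proof.
move=> a0 fin e e0.
have ge0 : forall k, (0 <= k)%N -> 0 <= (a k)%:E by move=> k _; rewrite lee_fin.
set S := \sum_(n <oo) (a n)%:E.
have S0 : 0 <= S by apply: nneseries_ge0 => n _ _; rewrite lee_fin.
have Sfin : S \is a fin_num by rewrite ge0_fin_numE.
have SE : S = ereal_sup (range (fun n => \sum_(0 <= i < n | true) (a i)%:E)).
  rewrite /S; apply: cvg_lim => //; apply: ereal_nondecreasing_cvgn.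
  by apply: ereal_nondecreasing_series => n _ _; rewrite lee_fin.
have Sfin' := Sfin; rewrite SE in Sfin'.
have [x [N _ <-]] := ub_ereal_sup_adherent e0 Sfin'.
rewrite -SE => HN.
exists N.
have := @nneseries_split R (fun k => (a k)%:E) 0 N ge0; rewrite add0n -/S => SE2.
have t0 : 0 <= \sum_(N <= k <oo) (a k)%:E by apply: nneseries_ge0 => n _ _; rewrite lee_fin.
have tfin : \sum_(N <= k <oo) (a k)%:E \is a fin_num.
  rewrite ge0_fin_numE //; apply: le_lt_trans fin.
  rewrite -/S SE2 leeDr //.
  by rewrite sumEFin lee_fin; apply: sumr_ge0 => i _.
move: HN; rewrite SE2.
have -> : \sum_(0 <= i < N | true) (a i)%:E = (\sum_(0 <= i < N) a i)%:E.
  by rewrite sumEFin.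
move: tfin; case: (\sum_(N <= k <oo) (a k)%:E) => // t _.
set p := (\sum_(0 <= i < N) a i)%R.
move=> H; have : ((p + t - e)%:E < p%:E) := H; rewrite lte_fin lee_fin => {}H.
lra.
Qed.

Lemma term_le_series (a : nat -> R) n : (forall n, (0 <= a n)%R) ->
  (a n)%:E <= \sum_(k <oo) (a k)%:E.
Proof.
move=> a0; apply: le_trans (nneseries_lim_ge n.+1 _).
  by rewrite big_nat_recr //= leeDr // sume_ge0 // => i _; rewrite lee_fin.
by move=> k _ _; rewrite lee_fin.
Qed.

Lemma tail_small2 (a : nat -> R) : (forall n, (0 <= a n)%R) ->
  \sum_(n <oo) (a n)%:E < +oo -> forall e : R, (0 < e)%R ->
  exists N, forall M, (N <= M)%N -> \sum_(M <= k <oo) (a k)%:E <= e%:E.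
Proof.
move=> a0 fin e e0; have [N HN] := @tail_small a a0 fin e e0.

exists N => M NM; apply: le_trans HN.
rewrite (@nneseries_split R (fun k => (a k)%:E) N (M - N)); last first.
  by move=> k _; rewrite lee_fin.
rewrite subnKC // leeDr //; apply: sume_ge0 => k _; rewrite lee_fin //.
Qed.

End P2.

End M2.
Import M2.
Module M3.
Local Open Scope classical_set_scope.
Set Implicit Arguments. Unset Strict Implicit.
Section P3.
Variables (R : realType) (d : nat).
Local Notation vec := (vec R d).
Local Notation wl := (wl d).

Definition lev2 (f : vec) n : R := \sum_(w <- wl n) sqabs (f w).

Lemma sqabs_ge0 (z : R[i]) : 0 <= sqabs z.
Proof. by rewrite /sqabs addr_ge0 // sqr_ge0. Qed.

Lemma lev2_ge0 f n : 0 <= lev2 f n.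
Proof. by apply: sumr_ge0 => w _; apply: sqabs_ge0. Qed.

Lemma sqnorm_lev (f : vec) : sqnorm f = (\sum_(n <oo) (lev2 f n)%:E)%E.
Proof.
rewrite /sqnorm.
have -> : [set: word d] = \bigcup_n [set` wl n].
  apply/seteqP; split => w // _; exists (size w) => //=.
  by rewrite mem_wl.
rewrite nneseries_sum_bigcup; last 2 first.
- move=> i j _ _ [w [/= Hi Hj]]; move: Hi Hj; rewrite !mem_wl.
  by move=> /eqP <- /eqP.
- by move=> w; rewrite lee_fin sqabs_ge0.
apply: eq_eseriesr => n _.
rewrite esum_fset //; last by move=> w _; rewrite lee_fin sqabs_ge0.
by rewrite -fsbig_seq ?uniq_wl // sumEFin.
exact: finite_seq.
Qed.

Lemma lev2_level n (f : vec) k : in_level n f -> k != n -> lev2 f k = 0.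
Proof.
move=> hf kn; rewrite /lev2 big_seq big1 // => w; rewrite mem_wl => /eqP wk.
by rewrite hf ?wk // /sqabs; rewrite /= expr0n /= addr0.
Qed.

Lemma sqnorm_level n (f : vec) : in_level n f -> sqnorm f = (lev2 f n)%:E.
Proof.
move=> hf; rewrite sqnorm_lev.
rewrite (@nneseries_split R (fun k => (lev2 f k)%:E) 0 n.+1); last first.
  by move=> k _; rewrite lee_fin lev2_ge0.
rewrite add0n eseries0 ?adde0; last first.
  move=> i Hi _; rewrite (lev2_level hf) //; apply/eqP => ein.
  by move: Hi; rewrite ein ltnn.
rewrite big_nat_recr //= big_nat big1 ?add0e // => k /andP[_ kn].
by rewrite (lev2_level hf) // ltn_eqF.
Qed.

Lemma l2_level n (f : vec) : in_level n f -> l2 f.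
Proof. by move=> hf; rewrite /l2 (sqnorm_level hf) ltry. Qed.

Lemma vnorm_level n (f : vec) : in_level n f -> vnorm f = Num.sqrt (lev2 f n).
Proof. by move=> hf; rewrite /vnorm (sqnorm_level hf). Qed.

Lemma vnorm_ge0 (f : vec) : 0 <= vnorm f.
Proof. exact: sqrtr_ge0. Qed.

Lemma sqabs_le_lev2 (f : vec) w : sqabs (f w) <= lev2 f (size w).
Proof.
rewrite /lev2 (bigD1_seq w) ?mem_wl ?uniq_wl //= lerDl.
by apply: sumr_ge0 => v _; apply: sqabs_ge0.
Qed.

Lemma lev2_le_sqnorm (f : vec) n : ((lev2 f n)%:E <= sqnorm f)%E.
Proof. by rewrite sqnorm_lev; apply: term_le_series => k; apply: lev2_ge0. Qed.

Lemma sqnorm_le (f g : vec) (c : R) : 0 <= c ->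
  (forall n, lev2 g n <= c * lev2 f n) -> (sqnorm g <= c%:E * sqnorm f)%E.
Proof.
move=> c0 H; rewrite !sqnorm_lev -nneseriesZl; last by move=> i _; rewrite lee_fin lev2_ge0.
apply: lee_nneseries; first by move=> i _ _; rewrite lee_fin lev2_ge0.
by move=> n _; rewrite -EFinM lee_fin.
Qed.

Lemma sqnorm_ge0 (f : vec) : (0 <= sqnorm f)%E.
Proof. by rewrite sqnorm_lev; apply: nneseries_ge0 => n _ _; rewrite lee_fin lev2_ge0. Qed.

Lemma l2_le (f g : vec) (c : R) : 0 <= c -> l2 f ->
  (forall n, lev2 g n <= c * lev2 f n) -> l2 g.
Proof.
move=> c0 hf H; rewrite /l2; apply: le_lt_trans (sqnorm_le c0 H) _.
move: hf; rewrite /l2.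
have := sqnorm_ge0 f; case: (sqnorm f) => // r _ _.
by rewrite -EFinM ltry.
Qed.

Lemma sqnormE (f : vec) : l2 f -> sqnorm f = ((vnorm f) ^+ 2)%:E.
Proof.
rewrite /l2 /vnorm; have := sqnorm_ge0 f; case: (sqnorm f) => // r.
by rewrite lee_fin => r0 _ /=; rewrite sqr_sqrtr.
Qed.

Lemma vnorm_le (f g : vec) (c : R) : 0 <= c -> l2 f ->
  (forall n, lev2 g n <= c ^+ 2 * lev2 f n) -> vnorm g <= c * vnorm f.
Proof.
move=> c0 hf H.
have c20 : 0 <= c ^+ 2 by apply: sqr_ge0.
have hg := l2_le c20 hf H.
have := sqnorm_le c20 H; rewrite (sqnormE hf) (sqnormE hg) -EFinM lee_fin.
rewrite -exprMn => h.
rewrite -(@ler_pXn2r _ 2) //; last by rewrite nnegrE mulr_ge0 // vnorm_ge0.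
by rewrite nnegrE vnorm_ge0.
Qed.

Lemma sqabsM (a z : R[i]) : sqabs (a * z) = sqabs a * sqabs z.
Proof.
by rewrite /sqabs; case: a => [a1 a2]; case: z => [b1 b2] /=; ring.
Qed.

Lemma lev2_scale (a : R[i]) (f : vec) n :
  lev2 (fun w => a * f w) n = sqabs a * lev2 f n.
Proof. by rewrite /lev2 mulr_sumr; apply: eq_bigr => w _; rewrite sqabsM. Qed.

End P3.

End M3.
Import M3.
Module M4.
Local Open Scope classical_set_scope.
Set Implicit Arguments. Unset Strict Implicit.
Section P4.
Variables (R : realType) (d : nat).
Local Notation vec := (vec R d).
Local Notation op := (op R d).
Local Notation wl := (wl d).

Definition zv : vec := fun _ => 0.

Lemma zv_level n : in_level n zv.
Proof. by []. Qed.

Lemma l2_zv : l2 zv.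
Proof. exact: (l2_level (zv_level (n:=0))). Qed.

Lemma vnorm_zv : vnorm zv = 0.
Proof.
rewrite (vnorm_level (zv_level (n:=0))) /lev2 big1 ?sqrtr0 // => w _.
by rewrite /sqabs /= expr0n /= addr0.
Qed.

Variables (S : op) (hS : bounded_op S).

Lemma lin0 : S zv = zv.
Proof.
case: hS => _ hl _.
have := hl 1 zv zv l2_zv l2_zv.
have -> : (fun w => 1 * zv w + zv w) = zv by apply: funext => w; rewrite /zv mul1r addr0.
move=> h; apply: funext => w; have := congr1 (fun F => F w) h => /= h2.
rewrite /zv; apply: (addIr (S zv w)); rewrite add0r [in RHS]h2 mul1r //.
Qed.

Lemma linD f g : l2 f -> l2 g -> S (fun w => f w + g w) = fun w => S f w + S g w.
Proof.
case: hS => _ hl _ hf hg.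
have := hl 1 f g hf hg.
have -> : (fun w => 1 * f w + g w) = (fun w => f w + g w) by apply: funext => w; rewrite mul1r.
by move=> ->; apply: funext => w; rewrite mul1r.
Qed.

Lemma linZ a f : l2 f -> S (fun w => a * f w) = fun w => a * S f w.
Proof.
case: hS => _ hl _ hf.
have := hl a f zv hf l2_zv.
have -> : (fun w => a * f w + zv w) = (fun w => a * f w) by apply: funext => w; rewrite /zv addr0.
by move=> ->; rewrite lin0; apply: funext => w; rewrite /zv addr0.
Qed.


Lemma sqabs0 : sqabs (0 : R[i]) = 0.
Proof. by rewrite /sqabs /= expr0n /= addr0. Qed.

Lemma sqabsD_le (a b : R[i]) : sqabs (a + b) <= 2 * sqabs a + 2 * sqabs b.
Proof.
rewrite /sqabs; case: a => [a1 a2]; case: b => [b1 b2] /=.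
have := sqr_ge0 (a1 - b1); have := sqr_ge0 (a2 - b2).
rewrite !expr2 => h1 h2; nra.
Qed.

Lemma sqabs_eq0 (z : R[i]) : sqabs z = 0 -> z = 0.
Proof.
rewrite /sqabs; case: z => [a b] /= h.
have h1 := sqr_ge0 a; have h2 := sqr_ge0 b.
have ha : a ^+ 2 = 0 by lra.
have hb : b ^+ 2 = 0 by lra.
move/eqP: ha; rewrite sqrf_eq0 => /eqP ha.
move/eqP: hb; rewrite sqrf_eq0 => /eqP hb.
by rewrite ha hb.
Qed.

Lemma l2_add (f g : vec) : l2 f -> l2 g -> l2 (fun w => f w + g w).
Proof.
rewrite /l2 !sqnorm_lev => hf hg.
apply: (@le_lt_trans _ _ (\sum_(n <oo) ((2 * lev2 f n)%:E + (2 * lev2 g n)%:E))%E).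
  apply: lee_nneseries; first by move=> i _ _; rewrite lee_fin lev2_ge0.
  move=> n _; rewrite -EFinD lee_fin /lev2 !mulr_sumr -big_split /=.
  by apply: ler_sum => w _; apply: sqabsD_le.
rewrite nneseriesD; last 2 first.
- by move=> i _ _; rewrite lee_fin mulr_ge0 ?lev2_ge0.
- by move=> i _ _; rewrite lee_fin mulr_ge0 ?lev2_ge0.
have e1 : (\sum_(n <oo) (2 * lev2 f n)%:E)%E = (2%:E * \sum_(n <oo) (lev2 f n)%:E)%E.
  rewrite -nneseriesZl; last by move=> i _; rewrite lee_fin lev2_ge0.
  by apply: eq_eseriesr => n _; rewrite EFinM.
have e2 : (\sum_(n <oo) (2 * lev2 g n)%:E)%E = (2%:E * \sum_(n <oo) (lev2 g n)%:E)%E.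
  rewrite -nneseriesZl; last by move=> i _; rewrite lee_fin lev2_ge0.
  by apply: eq_eseriesr => n _; rewrite EFinM.
rewrite e1 e2.
have g0 : (0 <= \sum_(n <oo) (lev2 g n)%:E)%E.
  by apply: nneseries_ge0 => n _ _; rewrite lee_fin lev2_ge0.
have f0 : (0 <= \sum_(n <oo) (lev2 f n)%:E)%E.
  by apply: nneseries_ge0 => n _ _; rewrite lee_fin lev2_ge0.
move: hf hg f0 g0.
case: (\sum_(n <oo) (lev2 f n)%:E)%E => // x; case: (\sum_(n <oo) (lev2 g n)%:E)%E => // y.
by move=> _ _ _ _; rewrite -!EFinM -EFinD ltry.
Qed.

Lemma l2_sum (I : Type) (s : seq I) (F : I -> vec) : (forall i, l2 (F i)) ->
  l2 (fun w => \sum_(i <- s) F i w).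
Proof.
move=> hF; elim: s => [|i s IH].
  have -> : (fun w => \sum_(i <- [::]) F i w) = zv by apply: funext => w; rewrite big_nil.
  exact: l2_zv.
have -> : (fun w => \sum_(j <- i :: s) F j w) = (fun w => F i w + \sum_(j <- s) F j w).
  by apply: funext => w; rewrite big_cons.
exact: l2_add.
Qed.

Lemma linsum (I : Type) (s : seq I) (F : I -> vec) : (forall i, l2 (F i)) ->
  S (fun w => \sum_(i <- s) F i w) = fun w => \sum_(i <- s) S (F i) w.
Proof.
move=> hF; have hs := fun s' => l2_sum s' hF; elim: s => [|i s IH].
  have -> : (fun w => \sum_(i <- [::]) F i w) = zv by apply: funext => w; rewrite big_nil.
  by rewrite lin0; apply: funext => w; rewrite big_nil.
have -> : (fun w => \sum_(j <- i :: s) F j w) = (fun w => F i w + \sum_(j <- s) F j w).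
  by apply: funext => w; rewrite big_cons.
rewrite linD // IH; apply: funext => w; by rewrite big_cons.
Qed.

Definition restr (f : vec) n : vec := fun v => if size v == n then f v else 0.

Lemma restr_level f n : in_level n (restr f n).
Proof. by move=> w /negbTE; rewrite /restr => ->. Qed.
Arguments restr_level f n : clear implicits.

Lemma lev2_restr_le f n k : lev2 (restr f n) k <= lev2 f k.
Proof.
rewrite /lev2 /restr; apply: ler_sum => w _; case: ifP => // _.
by rewrite sqabs0 sqabs_ge0.
Qed.

Lemma lev2_restr f n : lev2 (restr f n) n = lev2 f n.
Proof.
rewrite /lev2 /restr big_seq [RHS]big_seq; apply: eq_bigr => w.
by rewrite mem_wl => ->.
Qed.


Lemma lev2_le_vnorm (h : vec) n : l2 h -> lev2 h n <= vnorm h ^+ 2.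
Proof. by move=> hh; rewrite -lee_fin -sqnormE // lev2_le_sqnorm. Qed.

Lemma sqnorm_tail_le (f g : vec) N : (forall k, (k < N)%N -> lev2 g k = 0) ->
  (forall k, lev2 g k <= lev2 f k) ->
  (sqnorm g <= \sum_(N <= k <oo) (lev2 f k)%:E)%E.
Proof.
move=> h0 hle; rewrite sqnorm_lev.
rewrite (@nneseries_split R (fun k => (lev2 g k)%:E) 0 N); last first.
  by move=> k _; rewrite lee_fin lev2_ge0.
rewrite add0n big_nat big1 ?add0e; last by move=> k /andP[_ kN]; rewrite h0.
apply: lee_nneseries; first by move=> i _ _; rewrite lee_fin lev2_ge0.
by move=> n _; rewrite lee_fin.
Qed.

Hypothesis hB : block_diagonal S.

Lemma cont_restr (f : vec) w : l2 f -> S f w = S (restr f (size w)) w.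
Proof.
move=> hf; set n := size w.
pose g : vec := fun v => if size v == n then 0 else f v.
have lev_g k : lev2 g k <= lev2 f k.
  rewrite /lev2 /g; apply: ler_sum => v _; case: ifP => // _.
  by rewrite sqabs0 sqabs_ge0.
have hg : l2 g by apply: (@l2_le _ _ f g 1) => // k; rewrite mul1r.
have hr : l2 (restr f n) := l2_level (restr_level f n).
have Hf : f = (fun v => restr f n v + g v).
  by apply: funext => v; rewrite /restr /g; case: ifP; rewrite ?addr0 ?add0r.
rewrite {1}Hf linD //.
suff -> : S g w = 0 by rewrite addr0.
case: hS => _ _ [M hM].
pose gl N : vec := fun v => if (size v <= N)%N then g v else 0.
pose gh N : vec := fun v => if (N < size v)%N then g v else 0.
have Sgl N : S (gl N) w = 0.
  have -> : gl N = (fun v => \sum_(k <- iota 0 N.+1) restr g k v).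
    apply: funext => v; rewrite /gl /restr.
    rewrite (eq_bigr (fun k => if k == size v then g v else 0)); last first.
      by move=> k _; rewrite eq_sym.
    by rewrite big_if_eq ?iota_uniq // mem_iota add0n ltnS.
  rewrite linsum; last by move=> k; apply: l2_level (restr_level g k).
  rewrite big1 // => k _.
  case: (eqVneq k n) => [->|kn].
    have -> : restr g n = zv.
      by apply: funext => v; rewrite /restr /g /zv; case: ifP => // ->.
    by rewrite lin0.
  have := hB (l2_level (restr_level g k)) (restr_level g k).
  by move=> /(_ w); apply; rewrite eq_sym.
have Sgh (N : nat) : S g w = S (gh N) w.
  have -> : g = (fun v => gl N v + gh N v).
    apply: funext => v; rewrite /gl /gh; case: leqP => _; rewrite ?addr0 ?add0r //.
  rewrite linD ?Sgl ?add0r //.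
    apply: (@l2_le _ _ g _ 1) => // k; rewrite mul1r /lev2; apply: ler_sum => v _.
    by rewrite /gl; case: ifP => // _; rewrite sqabs0 sqabs_ge0.
  apply: (@l2_le _ _ g _ 1) => // k; rewrite mul1r /lev2; apply: ler_sum => v _.
  by rewrite /gh; case: ifP => // _; rewrite sqabs0 sqabs_ge0.
have fin : (\sum_(k <oo) (lev2 f k)%:E < +oo)%E by rewrite -sqnorm_lev.
apply: sqabs_eq0; apply/eqP; rewrite eq_le sqabs_ge0 andbT.
apply/ler_addgt0Pr => e e0; rewrite add0r.
have eM : 0 < e / (M ^+ 2 + 1).
  by rewrite divr_gt0 // ltr_pwDr // sqr_ge0.
have [N HN] := @tail_small2 R (fun k => lev2 f k) (fun k => lev2_ge0 f k) fin _ eM.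
have hghN : l2 (gh N).
  apply: (@l2_le _ _ g _ 1) => // k; rewrite mul1r /lev2; apply: ler_sum => v _.
  by rewrite /gh; case: ifP => // _; rewrite sqabs0 sqabs_ge0.
have hT : l2 (S (gh N)) by case: hS => + _ _; apply.
have sq : vnorm (gh N) ^+ 2 <= e / (M ^+ 2 + 1).
  rewrite -lee_fin -sqnormE //; apply: le_trans (HN N.+1 (leqW (leqnn N))).
  apply: sqnorm_tail_le.
    move=> k kN; rewrite /lev2 big_seq big1 // => v; rewrite mem_wl => /eqP vk.
    by rewrite /gh vk ltnNge -ltnS kN /= sqabs0.
  move=> k; apply: le_trans (lev_g k); rewrite /lev2; apply: ler_sum => v _.
  by rewrite /gh; case: ifP => // _; rewrite sqabs0 sqabs_ge0.
rewrite (Sgh N); apply: le_trans (sqabs_le_lev2 _ _) _.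
apply: le_trans (lev2_le_vnorm _ hT) _.
have h1 := hM _ hghN.
have v0 := vnorm_ge0 (S (gh N)).
have v1 := vnorm_ge0 (gh N).
have : vnorm (S (gh N)) ^+ 2 <= (M * vnorm (gh N)) ^+ 2.
  by rewrite ler_pXn2r // ?nnegrE // (le_trans v0 h1).
rewrite exprMn => h2; apply: le_trans h2 _.
have M0 := sqr_ge0 M.
have : M ^+ 2 * vnorm (gh N) ^+ 2 <= M ^+ 2 * (e / (M ^+ 2 + 1)).
  by rewrite ler_wpM2l.
move=> h3; apply: le_trans h3 _.
rewrite mulrA ler_pdivrMr ?ltr_pwDr //; nra.
Qed.

End P4.

End M4.
Import M4.
Module M5.
Local Open Scope classical_set_scope.
Set Implicit Arguments. Unset Strict Implicit.
Arguments zv {R d}. Arguments l2_zv {R d}. Arguments vnorm_zv {R d}.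
Section P5.
Variables (R : realType) (d : nat).
Local Notation vec := (vec R d).
Local Notation op := (op R d).
Local Notation wl := (wl d).

Lemma vnorm_scale (c : R[i]) (h : vec) : l2 h ->
  vnorm (fun w => c * h w) = Num.sqrt (sqabs c) * vnorm h.
Proof.
rewrite /l2 /vnorm => hh.
have -> : sqnorm (fun w => c * h w) = ((sqabs c)%:E * sqnorm h)%E.
  rewrite !sqnorm_lev -nneseriesZl; last by move=> i _; rewrite lee_fin lev2_ge0.
  by apply: eq_eseriesr => n _; rewrite lev2_scale EFinM.
move: hh (sqnorm_ge0 h); case: (sqnorm h) => // s _; rewrite lee_fin => s0 /=.
by rewrite sqrtrM // sqabs_ge0.
Qed.

Lemma sqabsC (r : R) : sqabs (Complex r 0) = r ^+ 2.
Proof. by rewrite /sqabs /= expr0n /= addr0. Qed.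

Lemma restr_norm_ge0 (S : op) n : bounded_op S -> (0 <= restr_norm S n)%E.
Proof.
move=> hS; apply: le_trans (ereal_sup_ubound _).
  2: exists zv; last reflexivity.
  by rewrite lee_fin vnorm_ge0.
by split; [exact: l2_zv | split; [exact: zv_level | rewrite vnorm_zv]].
Qed.

Lemma restr_bound (S : op) n (x : vec) : bounded_op S ->
  (restr_norm S n < +oo)%E -> l2 x -> in_level n x ->
  vnorm (S x) <= fine (restr_norm S n) * vnorm x.
Proof.
move=> hS fin hx lx.
have r0 := restr_norm_ge0 n hS.
have [v0|vpos] := eqVneq (vnorm x) 0.
  have hl : lev2 x n = 0.
    move: v0; rewrite (vnorm_level lx) => /eqP; rewrite sqrtr_eq0 => h.
    by apply/eqP; rewrite eq_le h lev2_ge0.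
  have -> : x = zv.
    apply: funext => w; rewrite /zv; case: (eqVneq (size w) n) => [wn|wn]; last exact: lx.
    apply: sqabs_eq0; apply/eqP; rewrite eq_le sqabs_ge0 andbT -hl -wn.
    exact: sqabs_le_lev2.
  by rewrite (lin0 hS) vnorm_zv mulr0.
have vgt : 0 < vnorm x by rewrite lt_def vpos vnorm_ge0.
set a : R[i] := Complex ((vnorm x)^-1) 0.
set y : vec := fun w => a * x w.
have ly : in_level n y by move=> w /lx; rewrite /y => ->; rewrite mulr0.
have hy : l2 y := l2_level ly.
have vy : vnorm y = 1.
  rewrite /y vnorm_scale // /a sqabsC sqrtr_sqr ger0_norm ?invr_ge0 ?vnorm_ge0 //.
  by rewrite mulVf.
have Sy : S y = fun w => a * S x w by rewrite /y linZ.
have : ((vnorm (S y))%:E <= restr_norm S n)%E.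
  apply: ereal_sup_ubound; exists y => //.
  by split => //; split => //; rewrite vy.
have hSx : l2 (S x) by case: hS => + _ _; apply.
rewrite Sy vnorm_scale // /a sqabsC sqrtr_sqr ger0_norm ?invr_ge0 ?vnorm_ge0 //.
move: fin r0; case: (restr_norm S n) => // r _ _.
rewrite lee_fin /= => h.
by rewrite -ler_pdivrMr // mulrC.
Qed.

End P5.

End M5.
Import M5.
Module M6.
Local Open Scope classical_set_scope.
Set Implicit Arguments. Unset Strict Implicit.
Arguments zv {R d}. Arguments l2_zv {R d}. Arguments vnorm_zv {R d}.
Section P6.
Variables (R : realType) (d : nat).
Local Notation vec := (vec R d).
Local Notation op := (op R d).
Local Notation wl := (wl d).
Variables (T : op) (hT : bounded_op T) (hB : block_diagonal T) (j0 : 'I_d).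

Definition delta (v : seq 'I_d) : vec := fun w => if w == v then 1 else 0.
Definition tc (u v : seq 'I_d) : R[i] := T (delta v) u.

Definition Pm (m : nat) : op := fun f w =>
  \sum_(k <- iota 0 m) \sum_(u <- wl k) \sum_(v <- wl k) tc u v * E0op u v f w
  + \sum_(u <- wl m) \sum_(v <- wl m) tc u v * Eop u v f w.

Lemma SP_Pm m : star_poly_L (Pm m).
Proof.
apply: spL_add; apply: (SP_sum j0) => k; rewrite ?/=.
- apply: (SP_sum j0) => u; apply: (SP_sum j0) => v.
  exact: (spL_scale _ (SP_E0op j0 u v)).
- apply: (SP_sum j0) => v; exact: (spL_scale _ (SP_Eop j0 k v)).
Qed.

Lemma delta_level v : in_level (size v) (delta v).
Proof. move=> w hw; rewrite /delta; case: eqVneq => // ewv; by rewrite ewv eqxx in hw. Qed.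

Lemma T_level k (x : vec) w : in_level k x -> T x w = \sum_(v <- wl k) tc w v * x v.
Proof.
move=> lx.
have Hx : x = fun w => \sum_(v <- wl k) (fun v w => x v * delta v w) v w.
  apply: funext => w' /=; rewrite /delta.
  rewrite (eq_bigr (fun v => if v == w' then x v else 0)); last first.
    by move=> v _; rewrite eq_sym; case: ifP; rewrite ?mulr1 ?mulr0.
  rewrite big_if_eq ?uniq_wl // mem_wl; case: eqP => // /eqP h; by rewrite lx.
rewrite {1}Hx (linsum hT); last first.
  by move=> v; apply: (@l2_level _ _ (size v)) => w' /(@delta_level v) ->; rewrite mulr0.
apply: eq_bigr => v _; rewrite (linZ hT); last exact: l2_level (@delta_level v).
by rewrite mulrC.
Qed.

Lemma inner0 k (f : vec) w :
  \sum_(u <- wl k) \sum_(v <- wl k) tc u v * E0op u v f w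
  = if size w == k then \sum_(v <- wl k) tc w v * f v else 0.
Proof.
rewrite (eq_bigr (fun u => if u == w then \sum_(v <- wl k) tc u v * f v else 0)).
  by rewrite big_if_eq ?uniq_wl // mem_wl.
move=> u _; rewrite /E0op eq_sym; case: ifP => _ //.
by rewrite big1 // => v _; rewrite mulr0.
Qed.

Lemma inner1 m (f : vec) w : (m <= size w)%N ->
  \sum_(u <- wl m) \sum_(v <- wl m) tc u v * Eop u v f w
  = \sum_(v <- wl m) tc (take m w) v * f (v ++ drop m w).
Proof.
move=> mw.
rewrite big_seq (eq_bigr (fun u => if u == take m w then
   \sum_(v <- wl m) tc u v * f (v ++ drop m w) else 0)).
  rewrite -big_seq big_if_eq ?uniq_wl // mem_wl size_take.
  by case: ltngtP mw => //; rewrite ?eqxx // => ->; rewrite eqxx.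
move=> u; rewrite mem_wl => /eqP um; rewrite /Eop um eq_sym; case: ifP => _ //.
by rewrite big1 // => v _; rewrite mulr0.
Qed.

Lemma P_small m (f : vec) w : (size w < m)%N ->
  Pm m f w = \sum_(v <- wl (size w)) tc w v * f v.
Proof.
move=> wm; rewrite /Pm.
have -> : \sum_(u <- wl m) \sum_(v <- wl m) tc u v * Eop u v f w = 0.
  rewrite big_seq; apply: big1 => u; rewrite mem_wl => /eqP um.
  apply: big1 => v _.
  rewrite /Eop um take_oversize; last exact: ltnW.
  have -> : (w == u) = false.
    by apply/negbTE; apply/eqP => wu; move: wm; rewrite wu um ltnn.
  by rewrite mulr0.
rewrite addr0.
rewrite (eq_bigr (fun k => if k == size w then \sum_(v <- wl k) tc w v * f v else 0)).
  by rewrite big_if_eq ?iota_uniq // mem_iota add0n wm.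
by move=> k _; rewrite inner0 eq_sym.
Qed.

Lemma P_big m (f : vec) w : (m <= size w)%N ->
  Pm m f w = \sum_(v <- wl m) tc (take m w) v * f (v ++ drop m w).
Proof.
move=> mw; rewrite /Pm inner1 // big_seq big1 ?add0r // => k.
rewrite mem_iota add0n => km; rewrite inner0.
by case: eqP => // wk; move: km mw; rewrite wk => /leq_trans h /h; rewrite ltnn.
Qed.

Lemma P_restr m (f : vec) w : Pm m f w = Pm m (restr f (size w)) w.
Proof.
case: (ltnP (size w) m) => hw.
  rewrite !P_small //; apply: eq_big_seq => v; rewrite mem_wl => /eqP vw.
  by rewrite /restr vw eqxx.
rewrite !P_big //; apply: eq_big_seq => v; rewrite mem_wl => /eqP vm.
by rewrite /restr size_cat size_drop vm subnKC // eqxx.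
Qed.

Lemma P_rcons m (f : vec) w i : (m <= size w)%N ->
  Pm m f (rcons w i) = Pm m (Rstar i f) w.
Proof.
move=> mw; rewrite !P_big ?size_rcons ?(leq_trans mw) //.
rewrite -cats1 takel_cat // drop_cat.
case: ltnP => h.
  by apply: eq_bigr => v _; rewrite /Rstar -cats1 catA.
have mE : m = size w by apply/eqP; rewrite eqn_leq mw h.
rewrite mE subnn drop0 drop_size; apply: eq_bigr => v _.
by rewrite /Rstar cats0 -cats1.
Qed.

Lemma T_eq_P m k (x : vec) w : (k <= m)%N -> in_level k x -> size w = k ->
  T x w = Pm m x w.
Proof.
move=> km lx wk; rewrite (T_level w lx).
case: (ltnP k m) => h.
  by rewrite P_small wk.
have mk : m = k by apply/eqP; rewrite eqn_leq km h.
rewrite P_big ?wk ?mk // take_oversize ?wk // drop_oversize ?wk //.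
by apply: eq_bigr => v _; rewrite cats0.
Qed.

End P6.

End M6.
Import M6.
Module M7.
Set Implicit Arguments. Unset Strict Implicit.
Section P7.
Variables (R : realType).

Lemma sqabs_sub_le (a b : R[i]) (t u : R) : 0 < t -> t * u = 1 ->
  sqabs (a - b) <= (1 + t) * sqabs a + (1 + u) * sqabs b.
Proof.
move=> t0 tu; rewrite /sqabs; case: a => [a1 a2]; case: b => [b1 b2] /=.
have u0 : 0 < u.
  by rewrite -(pmulr_rgt0 _ t0) tu ltr01.
have h1 : 0 <= u * (t * a1 + b1) ^+ 2 by rewrite mulr_ge0 ?sqr_ge0 // ltW.
have h2 : 0 <= u * (t * a2 + b2) ^+ 2 by rewrite mulr_ge0 ?sqr_ge0 // ltW.
have e1 : u * (t * a1 + b1) ^+ 2 = t * a1 ^+ 2 + 2 * a1 * b1 + u * b1 ^+ 2.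
  have ut : u * t = 1 by rewrite mulrC.
  transitivity ((u * t) * (t * a1 ^+ 2) + 2 * (u * t) * a1 * b1 + u * b1 ^+ 2).
    by ring.
  by rewrite ut; ring.
have e2 : u * (t * a2 + b2) ^+ 2 = t * a2 ^+ 2 + 2 * a2 * b2 + u * b2 ^+ 2.
  have ut : u * t = 1 by rewrite mulrC.
  transitivity ((u * t) * (t * a2 ^+ 2) + 2 * (u * t) * a2 * b2 + u * b2 ^+ 2).
    by ring.
  by rewrite ut; ring.
rewrite e1 e2 in h1 h2.
have -> : (a1 + - b1) = a1 - b1 by [].
rewrite !expr2 in h1 h2 *; nra.
Qed.

Lemma mink_pos (I : Type) (s : seq I) (a b : I -> R[i]) (A B : R) :
  0 < A -> 0 < B ->
  \sum_(i <- s) sqabs (a i) <= A ^+ 2 -> \sum_(i <- s) sqabs (b i) <= B ^+ 2 ->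
  \sum_(i <- s) sqabs (a i - b i) <= (A + B) ^+ 2.
Proof.
move=> A0 B0 ha hb.
set t := B / A; set u := A / B.
have t0 : 0 < t by rewrite divr_gt0.
have u0 : 0 < u by rewrite divr_gt0.
have tu : t * u = 1 by rewrite /t /u mulrA divfK ?gt_eqF // divff // gt_eqF.
apply: le_trans (ler_sum _ (fun i _ => sqabs_sub_le (a i) (b i) t0 tu)) _.
rewrite big_split /= -!mulr_sumr.
have tA : t * A ^+ 2 = A * B by rewrite /t expr2; field; rewrite gt_eqF.
have uB : u * B ^+ 2 = A * B by rewrite /u expr2; field; rewrite gt_eqF.
have k1 : (1 + t) * \sum_(i <- s) sqabs (a i) <= (1 + t) * A ^+ 2.
  by rewrite ler_wpM2l // addr_ge0 // ltW.
have k2 : (1 + u) * \sum_(i <- s) sqabs (b i) <= (1 + u) * B ^+ 2.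
  by rewrite ler_wpM2l // addr_ge0 // ltW.
apply: le_trans (lerD k1 k2) _.
rewrite !mulrDl !mul1r tA uB; rewrite le_eqVlt; apply/orP; left; apply/eqP; ring.
Qed.

Lemma mink (I : Type) (s : seq I) (a b : I -> R[i]) (A B : R) :
  0 <= A -> 0 <= B ->
  \sum_(i <- s) sqabs (a i) <= A ^+ 2 -> \sum_(i <- s) sqabs (b i) <= B ^+ 2 ->
  \sum_(i <- s) sqabs (a i - b i) <= (A + B) ^+ 2.
Proof.
move=> A0 B0 ha hb; apply/ler_addgt0Pr => e e0.
set D := 4 * (A + B + 1).
have D0 : 0 < D by rewrite /D mulr_gt0 // ltr_wpDl // addr_ge0.
set del := Num.min 1 (e / D).
have del0 : 0 < del by rewrite lt_min ltr01 divr_gt0.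
have del1 : del <= 1 by rewrite ge_min lexx.
have del2 : del * D <= e.
  have : del <= e / D by rewrite ge_min lexx orbT.
  by rewrite ler_pdivlMr.
have h := @mink_pos I s a b (A + del) (B + del) (ltr_wpDl A0 del0) (ltr_wpDl B0 del0).
have ha' : \sum_(i <- s) sqabs (a i) <= (A + del) ^+ 2.
  apply: le_trans ha _; rewrite !expr2; nra.
have hb' : \sum_(i <- s) sqabs (b i) <= (B + del) ^+ 2.
  apply: le_trans hb _; rewrite !expr2; nra.
apply: le_trans (h ha' hb') _.
move: del2; rewrite /D => del2.
rewrite !expr2; nra.
Qed.

End P7.

End M7.
Import M7.
Module M8.
Local Open Scope classical_set_scope.
Set Implicit Arguments. Unset Strict Implicit.
Section P8.
Variables (R : realType) (d : nat).
Local Notation vec := (vec R d).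
Local Notation op := (op R d).
Local Notation wl := (wl d).
Variables (T : op) (hT : bounded_op T).
Local Notation C i := (commutator T (Rstar i)).
Hypothesis hC : forall i, bounded_op (C i).
Hypothesis hfin : forall i n, (restr_norm (C i) n < +oo)%E.

Definition rho k : R := \sum_(i <- enum 'I_d) fine (restr_norm (C i) k).

Lemma sq_sum_le (I : Type) (s : seq I) (r : I -> R) : (forall i, 0 <= r i) ->
  \sum_(i <- s) r i ^+ 2 <= (\sum_(i <- s) r i) ^+ 2.
Proof.
move=> r0; elim: s => [|i s IH]; first by rewrite !big_nil expr0n.
rewrite !big_cons.
have : 0 <= \sum_(j <- s) r j by apply: sumr_ge0.
have := r0 i; rewrite !expr2 in IH *; nra.
Qed.

Lemma Rstar_level n (x : vec) i : in_level n.+1 x -> in_level n (Rstar i x).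
Proof. by move=> lx w hw; rewrite /Rstar lx // size_rcons eqSS. Qed.

Lemma lev2_Rstar n (x : vec) :
  lev2 x n.+1 = \sum_(i <- enum 'I_d) lev2 (Rstar i x) n.
Proof. by rewrite /lev2 big_wlS. Qed.

Lemma fine_ge0 i k : 0 <= fine (restr_norm (C i) k).
Proof.
have := restr_norm_ge0 k (hC i); have := hfin i k.
by case: (restr_norm (C i) k).
Qed.

Lemma rho_ge0 k : 0 <= rho k.
Proof. by apply: sumr_ge0 => i _; apply: fine_ge0. Qed.

Lemma step m n (c : R) : (m <= n)%N -> 0 <= c ->
  (forall x, l2 x -> in_level n x -> lev2 (opsub T (Pm T m) x) n <= c ^+ 2 * lev2 x n) ->
  forall x, l2 x -> in_level n.+1 x ->
  lev2 (opsub T (Pm T m) x) n.+1 <= (c + rho n.+1) ^+ 2 * lev2 x n.+1.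
Proof.
move=> mn c0 IH x hx lx.
set L := lev2 x n.+1.
have L0 : 0 <= L by apply: lev2_ge0.
rewrite /lev2 big_wlS.
have E : forall i w, w \in wl n -> opsub T (Pm T m) x (rcons w i) =
    opsub T (Pm T m) (Rstar i x) w - C i x w.
  move=> i w; rewrite mem_wl => /eqP wn.
  rewrite /opsub /commutator P_rcons ?wn // /Rstar; ring.
rewrite (eq_bigr (fun i => \sum_(w <- wl n)
   sqabs (opsub T (Pm T m) (Rstar i x) w - C i x w))); last first.
  by move=> i _; rewrite big_seq [RHS]big_seq; apply: eq_bigr => w /E ->.
rewrite -(big_allpairs (F := fun p : 'I_d * seq 'I_d =>
   sqabs (opsub T (Pm T m) (Rstar p.1 x) p.2 - C p.1 x p.2))) /=.
have sL : Num.sqrt L ^+ 2 = L by rewrite sqr_sqrtr.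
have -> : (c + rho n.+1) ^+ 2 * L = (c * Num.sqrt L + rho n.+1 * Num.sqrt L) ^+ 2.
  by rewrite -mulrDl exprMn sL.
apply: (mink (a := fun p => opsub T (Pm T m) (Rstar p.1 x) p.2) (b := fun p => C p.1 x p.2)).
- by rewrite mulr_ge0 // sqrtr_ge0.
- by rewrite mulr_ge0 ?rho_ge0 // sqrtr_ge0.
- rewrite big_allpairs /= exprMn sL /L lev2_Rstar mulr_sumr.
  apply: ler_sum => i _; apply: IH; last exact: Rstar_level.
  exact: l2_level (Rstar_level i lx).
- rewrite big_allpairs /= exprMn sL.
  have vx : vnorm x = Num.sqrt L by rewrite (vnorm_level lx).
  apply: (@le_trans _ _ (\sum_(i <- enum 'I_d) (fine (restr_norm (C i) n.+1) * vnorm x) ^+ 2)).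
    apply: ler_sum => i _.
    have hCx : l2 (C i x) by case: (hC i) => + _ _; apply.
    apply: le_trans (lev2_le_vnorm _ hCx) _.
    have hb := restr_bound (hC i) (hfin i n.+1) hx lx.
    have v0 := vnorm_ge0 (C i x).
    rewrite !expr2; nra.
  rewrite (eq_bigr (fun i => fine (restr_norm (C i) n.+1) ^+ 2 * vnorm x ^+ 2)); last by move=> i _; rewrite exprMn.
  rewrite -mulr_suml vx sL ler_wpM2r //.
  by rewrite /rho; apply: sq_sum_le => i; apply: fine_ge0.
Qed.

End P8.

End M8.
Import M8.
Module M9.
Local Open Scope classical_set_scope.

Lemma eterm_le_series (R : realType) (u : nat -> \bar R) n : (forall n, (0 <= u n)%E) ->
  (u n <= \sum_(k <oo) u k)%E.
Proof.
move=> u0; apply: le_trans (nneseries_lim_ge n.+1 _).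
  by rewrite big_nat_recr //= leeDr // sume_ge0.
by move=> k _ _.
Qed.

End M9.
Import M9.

Theorem corollary3p6 (R : realType) (d : nat) (hd : (2 <= d)%N) (T : op R d) :
  bounded_op T -> block_diagonal T ->
  (forall i : 'I_d, classS (commutator T (@Rstar R d i))) ->
  in_Cuntz_Toeplitz T.
Proof.
move=> hT hB hC eps eps0.
have d0 : (0 < d)%N by apply: leq_trans hd.
pose j0 : 'I_d := Ordinal d0.
have hCb i : bounded_op (commutator T (Rstar i)) by case: (hC i).
have hsum i : (\sum_(n <oo) restr_norm (commutator T (Rstar i)) n < +oo)%E.
  by case: (hC i) => _ [_].
have hfin i n : (restr_norm (commutator T (Rstar i)) n < +oo)%E.
  apply: le_lt_trans (hsum i); apply: eterm_le_series => k.
  exact: restr_norm_ge0.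
pose a i k := fine (restr_norm (commutator T (Rstar i)) k).
have a0 i k : 0 <= a i k by apply: (fine_ge0 hCb hfin).
have aE i k : (a i k)%:E = restr_norm (commutator T (Rstar i)) k.
  rewrite /a fineK // ge0_fin_numE ?hfin //; exact: restr_norm_ge0.
set e' := eps / d%:R.
have e'0 : 0 < e' by rewrite divr_gt0 // ltr0n.
have hN : forall i : 'I_d, exists N, forall M, (N <= M)%N ->
    (\sum_(M <= k <oo) (a i k)%:E <= e'%:E)%E.
  move=> i; apply: (@tail_small2 R (a i) (a0 i)) => //.
  have -> : (\sum_(k <oo) (a i k)%:E)%E = (\sum_(k <oo) restr_norm (commutator T (Rstar i)) k)%E.
    by apply: eq_eseriesr => k _; rewrite aE.
  exact: hsum.
have [Nf HNf] := boolp.choice hN.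
set m := \max_(i <- enum 'I_d) Nf i.
have tail K : \sum_(m.+1 <= k < K) rho T k <= eps.
  rewrite /rho exchange_big /=.
  apply: (@le_trans _ _ (\sum_(i <- enum 'I_d) e')).
    apply: ler_sum => i _; rewrite -lee_fin -sumEFin.
    apply: le_trans (HNf i m.+1 _); last first.
      apply: leqW; rewrite /m (bigD1_seq i) ?mem_enum ?enum_uniq //=.
      exact: leq_maxl.
    apply: (@nneseries_lim_ge R (fun k => (a i k)%:E) xpredT m.+1 K).
    by move=> k _ _; rewrite lee_fin.
  rewrite big_const_seq count_predT size_enum_ord.
  have -> : iter d (+%R e') 0 = e' *+ d.
    by elim: (d) => [|n IH] //=; rewrite IH mulrS.
  by rewrite /e' -mulr_natr divfK // pnatr_eq0 -lt0n.
pose c n := \sum_(m.+1 <= k < n.+1) rho T k.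
have c0 n : 0 <= c n by apply: sumr_ge0 => k _; apply: (rho_ge0 hCb hfin).
have base n x : (n <= m)%N -> l2 x -> in_level n x ->
    lev2 (opsub T (Pm T m) x) n <= c n ^+ 2 * lev2 x n.
  move=> nm hx lx.
  have -> : lev2 (opsub T (Pm T m) x) n = 0.
    rewrite /lev2 big_seq big1 // => w; rewrite mem_wl => /eqP wn.
    by rewrite /opsub (T_eq_P hT nm lx wn) subrr sqabs0.
  by rewrite mulr_ge0 ?sqr_ge0 ?lev2_ge0.
have main n x : l2 x -> in_level n x ->
    lev2 (opsub T (Pm T m) x) n <= c n ^+ 2 * lev2 x n.
  elim: n x => [|n IH] x hx lx; first exact: base.
  case: (leqP n.+1 m) => h; first exact: base.
  have -> : c n.+1 = c n + rho T n.+1.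
    by rewrite /c big_nat_recr.
  by apply: (step hCb hfin) => //; rewrite -ltnS.
exists (Pm T m); split; first exact: SP_Pm.
move=> f hf; apply: vnorm_le => //; first exact: ltW.
move=> n.
have -> : lev2 (opsub T (Pm T m) f) n = lev2 (opsub T (Pm T m) (restr f n)) n.
  rewrite /lev2 big_seq [RHS]big_seq; apply: eq_bigr => w; rewrite mem_wl => /eqP wn.
  by rewrite /opsub (cont_restr hT hB w hf) (P_restr T m f w) wn.
have lr : in_level n (restr f n) := @restr_level R d f n.
apply: le_trans (main n _ (l2_level lr) lr) _.
rewrite lev2_restr ler_wpM2r ?lev2_ge0 //.
have hc := tail n.+1; have c0n := c0 n; rewrite /c in c0n *.
rewrite !expr2; nra.
Qed.
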